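(* Let $G$ be a finite group and let $p,q$ be distinct primes dividing $|G|$. Let $m,n$ be positive integers and suppose that $|G| = p^i q^n$ for some integer $i$ with $1 \le i \le m$. If $p \nmid q^n - 1$ and $q \nmid p^j - 1$ for every $j$ with $1 \le j \le m$, then $G$ has an abelian subgroup of order $pq$. *)

(* Defs.v *)
From mathcomp Require Import all_boot all_fingroup all_solvable.

(* Main.v *)
Require Import Defs.
From mathcomp Require Import all_boot all_fingroup all_solvable.

Theorem theorem2p9 (gT : finGroupType) (G : {group gT}) (p q m n i : nat) :
  prime p -> prime q -> p != q -> p %| #|G| -> q %| #|G| ->
  0 < m -> 0 < n -> 1 <= i <= m ->
  #|G| = p ^ i * q ^ n ->
  ~~ (p %| q ^ n - 1) ->
  (forall j, 1 <= j <= m -> ~~ (q %| p ^ j - 1)) ->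
  exists H : {group gT}, [/\ H \subset G, abelian H & #|H| = p * q].
Proof.
move=> pp pq pnq pG qG m0 n0 /andP[i1 im] oG hq hp.
have q1 : 1 < q by apply: prime_gt1.
have syl1 : #|'Syl_q(G)%g| == 1.
  set c := #|'Syl_q(G)%g|.
  have cm : c %% q = 1 := card_Syl_mod G pq.
  have cd : c %| p ^ i * q ^ n by rewrite -oG card_Syl_dvd.
  have cop : coprime c (q ^ n).
    rewrite coprimeXr // coprime_sym prime_coprime //.
    by rewrite /dvdn cm.
  move: cd; rewrite Gauss_dvdl // => /(dvdn_pfactor _ _ pp) [j ji cE]; rewrite cE in cm *; clear cE cop; move: cm.
  case: j ji => [|j] ji cm; first by rewrite expn0.
  have : ~~ (q %| p ^ j.+1 - 1) by apply: hp; rewrite /= (leq_trans ji).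
  by rewrite -eqn_mod_dvd ?expn_gt0 ?prime_gt0 // cm modn_small.
have [P sylP nPG] := normal_sylowP _ _ syl1.
have [x Gx ox] := Cauchy pp pG.
have px : (p.-group <[x]>)%g by rewrite /pgroup -orderE ox pnat_id.
have act : ([acts <[x]>, on P | 'J])%g.
  by rewrite astabsJ cycle_subG (subsetP (normal_norm nPG)).
have md := pgroup_fix_mod px act.
have oP : #|P| = q ^ n.
  rewrite (card_Hall sylP) oG partnM ?expn_gt0 ?prime_gt0 //.
  rewrite part_p'nat ?pnatX ?pnat_id //; last by rewrite pnatE // !inE pnq.
idtac.
  by rewrite mul1n part_pnat_id // pnatX pnat_id.
set C := ('Fix_(P | 'J)(<[x]>))%g in md.
have CE : C = (P :&: 'C(<[x]>))%g by rewrite /C afixJ.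
have ntC : #|C| != 1.
  apply: contra hq => /eqP C1.
  by rewrite -eqn_mod_dvd ?expn_gt0 ?prime_gt0 // -oP md C1.
rewrite CE in ntC.
set K := (P :&: 'C(<[x]>))%G.
have qK : (q.-group K)%g by apply: pgroupS (subsetIl _ _) (pHall_pgroup sylP).
have ntK : (K :!=: 1)%g by rewrite trivg_card1.
have [_ qdK _] := pgroup_pdiv qK ntK.
have [y Ky oy] := Cauchy pq qdK.
have [yP ycx] : y \in P /\ y \in 'C(<[x]>)%g by move/setIP: Ky.
have cxy : commute x y.
  by move: ycx; rewrite cent_cycle => /cent1P; apply: commute_sym.
have yG : y \in G by apply: (subsetP (pHall_sub sylP)).
exists <[x * y]>%G; split.
- by rewrite cycle_subG groupM.
- exact: cycle_abelian.
- rewrite -orderE orderM //; first by rewrite ox oy.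
  by rewrite ox oy prime_coprime // dvdn_prime2 //.
Qed.
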